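(* Let $(V,\nu)$ be a gauged space. Then there exist a compact Hausdorff space $X$ and a linear map $\phi:V\to C_{\mathbb{R}}(X)$ such that $\nu(x)=d_{C_{\mathbb{R}}(X)}(\phi(x))$ for all $x\in V$. Consequently $\phi$ is isometric from $(V,\|\cdot\|_\nu)$ into $C_{\mathbb{R}}(X)$ with the supremum norm, and $\phi$ is an order embedding of $(V,V_{+,\nu})$ into $(C_{\mathbb{R}}(X),C_{\mathbb{R}}(X)_+)$.
   Context: $C_{\mathbb{R}}(X)$ denotes the continuous real-valued functions on $X$, with the supremum norm and cone $C_{\mathbb{R}}(X)_+$ of pointwise nonnegative functions. A gauge on a real vector space $V$ is a map $\nu:V\to[0,\infty)$ with $\nu(x+y)\le\nu(x)+\nu(y)$ and $\nu(tx)=t\nu(x)$ for all $x,y\in V$, $t>0$; its conjugate is $\overline{\nu}(x)=\nu(-x)$. A gauge is proper if for every $x\neq0$, $\nu(x)\neq0$ or $\overline{\nu}(x)\neq0$; a gauged space is a pair $(V,\nu)$ with $\nu$ a proper gauge. The induced norm is $\|x\|_\nu=\max\{\nu(x),\overline{\nu}(x)\}$ and the induced cone is $V_{+,\nu}=\ker\overline{\nu}$. For a normed ordered vector space $(W,\|\cdot\|,W_+)$, $d_W(y)=\inf\{\|y+p\|:p\in W_+\}$. An order embedding is an injective linear map $\phi$ with $\phi(x)\ge0$ iff $x\ge0$. *)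

(* Defs.v *)
From Stdlib Require Import Reals List.
Open Scope R_scope.

Record VecSpace : Type := {
  vcar :> Type;
  vadd : vcar -> vcar -> vcar;
  vzero : vcar;
  vopp : vcar -> vcar;
  vscal : R -> vcar -> vcar;
  vaddA : forall x y z, vadd x (vadd y z) = vadd (vadd x y) z;
  vaddC : forall x y, vadd x y = vadd y x;
  vadd0 : forall x, vadd x vzero = x;
  vaddN : forall x, vadd x (vopp x) = vzero;
  vscalA : forall a b x, vscal a (vscal b x) = vscal (a * b) x;
  vscal1 : forall x, vscal 1 x = x;
  vscalDr : forall a x y, vscal a (vadd x y) = vadd (vscal a x) (vscal a y);
  vscalDl : forall a b x, vscal (a + b) x = vadd (vscal a x) (vscal b x)
}.
Arguments vadd {v}. Arguments vzero {v}. Arguments vopp {v}. Arguments vscal {v}.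

Definition is_gauge (V : VecSpace) (nu : V -> R) : Prop :=
  (forall x, 0 <= nu x) /\
  (forall x y, nu (vadd x y) <= nu x + nu y) /\
  (forall (t : R) x, 0 < t -> nu (vscal t x) = t * nu x).

Definition conj_gauge (V : VecSpace) (nu : V -> R) : V -> R :=
  fun x => nu (vopp x).

Definition is_proper_gauge (V : VecSpace) (nu : V -> R) : Prop :=
  is_gauge V nu /\
  (forall x, x <> vzero -> nu x <> 0 \/ conj_gauge V nu x <> 0).

Definition gauge_norm (V : VecSpace) (nu : V -> R) (x : V) : R :=
  Rmax (nu x) (conj_gauge V nu x).

Definition gauge_cone (V : VecSpace) (nu : V -> R) (x : V) : Prop :=
  conj_gauge V nu x = 0.

Record TopSpace : Type := {
  tcar :> Type;
  is_open : (tcar -> Prop) -> Prop;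
  open_full : is_open (fun _ => True);
  open_union : forall (I : Type) (U : I -> tcar -> Prop),
      (forall i, is_open (U i)) -> is_open (fun x => exists i, U i x);
  open_inter : forall U W, is_open U -> is_open W -> is_open (fun x => U x /\ W x)
}.

Definition compact_space (X : TopSpace) : Prop :=
  forall (I : Type) (U : I -> X -> Prop),
    (forall i, is_open X (U i)) -> (forall x, exists i, U i x) ->
    exists l : list I, forall x, exists i, In i l /\ U i x.

Definition hausdorff (X : TopSpace) : Prop :=
  forall x y : X, x <> y ->
    exists U W, is_open X U /\ is_open X W /\ U x /\ W y /\
                (forall z, ~ (U z /\ W z)).

Definition continuous_fun (X : TopSpace) (f : X -> R) : Prop :=
  forall (x : X) (eps : R), 0 < eps ->
    exists U, is_open X U /\ U x /\ forall y, U y -> Rabs (f y - f x) < eps.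

(** Supremum norm on C_R(X) (as a relation: [r] is the sup norm of [f];
    the value 0 is included so that the empty space gets norm 0). *)
Definition is_supnorm (X : TopSpace) (f : X -> R) (r : R) : Prop :=
  is_lub (fun y => y = 0 \/ exists t : X, y = Rabs (f t)) r.

Definition is_glb (E : R -> Prop) (m : R) : Prop :=
  (forall y, E y -> m <= y) /\ (forall b, (forall y, E y -> b <= y) -> b <= m).

Definition is_dC (X : TopSpace) (g : X -> R) (d : R) : Prop :=
  is_glb (fun r => exists p : X -> R, continuous_fun X p /\ (forall t, 0 <= p t) /\
                     is_supnorm X (fun t => g t + p t) r) d.

Definition is_linear (V : VecSpace) (X : TopSpace) (phi : V -> X -> R) : Prop :=
  (forall x y t, phi (vadd x y) t = phi x t + phi y t) /\
  (forall a x t, phi (vscal a x) t = a * phi x t).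

(* Main.v *)
Require Import Defs.
From HB Require Import structures.
From Stdlib Require Import Reals List Lra ClassicalEpsilon Classical.
From mathcomp Require Import all_boot all_order all_algebra.
From mathcomp Require Import boolp classical_sets topology normedtype Rstruct Rstruct_topology.
From mathcomp Require Import function_spaces finmap functions.
Open Scope R_scope.

Section VecFacts.
Variable V : VecSpace.

Lemma vadd0l (x : V) : vadd vzero x = x.
Proof. rewrite vaddC; apply vadd0. Qed.

Lemma vswap4 (a b c d : V) : vadd (vadd a b) (vadd c d) = vadd (vadd a c) (vadd b d).
Proof.
rewrite -!vaddA; f_equal; rewrite !vaddA; f_equal; apply vaddC.
Qed.

Lemma vscal0 (x : V) : vscal 0 x = vzero.
Proof.
have H : vscal 0 x = vadd (vscal 0 x) (vscal 0 x).
  by rewrite -vscalDl Rplus_0_l.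
rewrite -(vaddN _ (vscal 0 x)).
rewrite {2}H -vaddA vaddN vadd0 //.
Qed.

Lemma vscal_neg (a : R) (x : V) : vadd (vscal a x) (vscal (- a) x) = vzero.
Proof. by rewrite -vscalDl Rplus_opp_r vscal0. Qed.

Lemma vscalz (a : R) : vscal a (@vzero V) = vzero.
Proof. by rewrite -(vscal0 vzero) vscalA Rmult_0_r. Qed.

Lemma voppE (x : V) : vopp x = vscal (- 1) x.
Proof.
have H : vadd x (vscal (- 1) x) = vzero.
  by rewrite -{1}(vscal1 _ x) vscal_neg.
rewrite -(vadd0l (vopp x)) -H (vaddC _ x) -vaddA vaddN vadd0 //.
Qed.

Lemma vsub_eq0 (x y : V) : vadd x (vopp y) = vzero -> x = y.
Proof.
move=> H.
rewrite -(vadd0 _ x) -(vaddN _ y) (vaddC _ y) vaddA H vadd0l //.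
Qed.

Lemma vcancel (a b c : V) : vadd b a = vadd c a -> b = c.
Proof.
move=> H.
rewrite -(vadd0 _ b) -(vaddN _ a) vaddA H -vaddA vaddN vadd0 //.
Qed.

End VecFacts.
Section Graphs.
Variable V : VecSpace.
Variable nu : V -> R.
Hypothesis Hg : is_gauge V nu.

Lemma nu_ge0 x : 0 <= nu x. Proof. by case: Hg. Qed.
Lemma nu_sub x y : nu (vadd x y) <= nu x + nu y. Proof. by case: Hg => _ []. Qed.
Lemma nu_hom t x : 0 < t -> nu (vscal t x) = t * nu x. Proof. by case: Hg => _ [] _; apply. Qed.

Lemma nu0 : nu vzero = 0.
Proof.
have H := nu_hom 2 vzero ltac:(lra). rewrite vscalz in H. lra.
Qed.

Definition isPG (G : V * R -> Prop) : Prop :=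
  (forall x a b, G (x, a) -> G (x, b) -> a = b) /\
  (forall x y a b, G (x, a) -> G (y, b) -> G (vadd x y, a + b)) /\
  (forall t x a, G (x, a) -> G (vscal t x, t * a)) /\
  (forall x a, G (x, a) -> a <= nu x).

Definition ext (G : V * R -> Prop) (z : V) (c : R) : V * R -> Prop :=
  fun p => exists y a t, G (y, a) /\ p = (vadd y (vscal t z), a + t * c).

Lemma ext_sub G z c p : G p -> ext G z c p.
Proof.
case: p => y a Gp; exists y, a, 0; split => //.
by rewrite vscal0 vadd0 Rmult_0_l Rplus_0_r.
Qed.

Lemma ext_z G z c : G (vzero, 0) -> ext G z c (z, c).
Proof.
move=> G0; exists vzero, 0, 1; split => //.
by rewrite vscal1 vadd0l Rmult_1_l Rplus_0_l.
Qed.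

Lemma ext_PG G z c : isPG G -> (forall a, ~ G (z, a)) ->
  (forall y a, G (y, a) -> a - nu (vadd y (vopp z)) <= c /\ c <= nu (vadd y z) - a) ->
  isPG (ext G z c).
Proof.
move=> [Gf [Ga [Gs Gd]]] hz hc.
split; [|split; [|split]].
- move=> x a b [y1 [a1 [t1 [G1 E1]]]] [y2 [a2 [t2 [G2 E2]]]].
  injection E1 => Ea Ex; injection E2 => Eb Ex2.
  rewrite Ex2 in Ex.
  case: (Req_dec t1 t2) => Ht.
  + rewrite Ht in Ex. have Ey := vcancel _ _ _ _ Ex.
    rewrite -Ey in G1. by rewrite Ea Eb Ht (Gf _ _ _ G1 G2).
  + exfalso.
    have Gu := Ga _ _ _ _ G1 (Gs (- 1) _ _ G2).
    have Gz := Gs (/ (t2 - t1)) _ _ Gu.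
    have Hu : vadd y1 (vscal (- 1) y2) = vscal (t2 - t1) z.
      rewrite -[LHS]vadd0 -(vscal_neg _ t1 z) vswap4 -Ex.
      rewrite vswap4 -{1}(vscal1 _ y2) vscal_neg vadd0l -vscalDl.
      f_equal; ring.
    rewrite Hu vscalA Rinv_l ?vscal1 in Gz; last lra.
    exact: hz _ Gz.
- move=> x1 x2 b1 b2 [y1 [a1 [t1 [G1 E1]]]] [y2 [a2 [t2 [G2 E2]]]].
  injection E1 => -> ->; injection E2 => -> ->.
  exists (vadd y1 y2), (a1 + a2), (t1 + t2); split; first exact: Ga.
  rewrite vswap4 -vscalDl; f_equal; ring.
- move=> s x b [y [a [t [G1 E1]]]]; injection E1 => -> ->.
  exists (vscal s y), (s * a), (s * t); split; first exact: Gs.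
  rewrite vscalDr vscalA; f_equal; ring.
- move=> x b [y [a [t [G1 E1]]]]; injection E1 => -> ->.
  case: (Rtotal_order t 0) => [Ht|[Ht|Ht]].
  + set s := - t.
    have Hs : 0 < s by rewrite /s; lra.
    have [h1 _] := hc _ _ (Gs (/ s) _ _ G1).
    have E : vadd y (vscal t z) = vscal s (vadd (vscal (/ s) y) (vopp z)).
      rewrite voppE vscalDr !vscalA Rinv_r; last lra.
      rewrite vscal1; f_equal; f_equal; rewrite /s; ring.
    rewrite E nu_hom //.
    have h2 := Rmult_le_compat_l s _ _ (Rlt_le _ _ Hs) h1.
    have : s * (/ s * a - nu (vadd (vscal (/ s) y) (vopp z))) =
      a - s * nu (vadd (vscal (/ s) y) (vopp z)) by field; lra.
    rewrite /s in h2 * => E2; lra.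
  + rewrite Ht vscal0 vadd0 Rmult_0_l Rplus_0_r; exact: Gd.
  + have [_ h1] := hc _ _ (Gs (/ t) _ _ G1).
    have E : vadd y (vscal t z) = vscal t (vadd (vscal (/ t) y) z).
      rewrite vscalDr !vscalA Rinv_r ?vscal1 //; lra.
    rewrite E nu_hom //.
    have h2 := Rmult_le_compat_l t _ _ (Rlt_le _ _ Ht) h1.
    have : t * (nu (vadd (vscal (/ t) y) z) - / t * a) =
      t * nu (vadd (vscal (/ t) y) z) - a by field; lra.
    move=> E2; lra.
Qed.

Lemma c_exists G z : isPG G -> G (vzero, 0) ->
  exists c, forall y a, G (y, a) -> a - nu (vadd y (vopp z)) <= c /\ c <= nu (vadd y z) - a.
Proof.
move=> [Gf [Ga [Gs Gd]]] G0.
have key : forall y1 a1 y2 a2, G (y1, a1) -> G (y2, a2) ->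
    a1 - nu (vadd y1 (vopp z)) <= nu (vadd y2 z) - a2.
  move=> y1 a1 y2 a2 G1 G2.
  have h1 := Gd _ _ (Ga _ _ _ _ G1 G2).
  have h2 := nu_sub (vadd y1 (vopp z)) (vadd y2 z).
  rewrite vswap4 (vaddC _ (vopp z)) (vaddN _ z) vadd0 in h2. lra.
set E := fun r => exists y a, G (y, a) /\ r = a - nu (vadd y (vopp z)).
have bE : bound E.
  exists (nu (vadd vzero z) - 0) => r [y [a [Gy ->]]]; exact: key.
have nE : exists r, E r by exists (0 - nu (vadd vzero (vopp z))), vzero, 0.
have [c [ub lub]] := completeness E bE nE.
exists c => y a Gy; split.
- apply: ub; by exists y, a.
- apply: lub => r [y' [a' [Gy' ->]]]; exact: key.
Qed.

End Graphs.
Section HB.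
Variable V : VecSpace.
Variable nu : V -> R.
Hypothesis Hg : is_gauge V nu.

Definition lin (f : V -> R) :=
  (forall x y, f (vadd x y) = f x + f y) /\ (forall a x, f (vscal a x) = a * f x).

Lemma PG_single : isPG V nu (fun p => p = (vzero, 0)).
Proof.
split; [|split; [|split]].
- by move=> x a b [_ ->] [_ ->].
- move=> x y a b [-> ->] [-> ->]; by rewrite vadd0 Rplus_0_r.
- move=> t x a [-> ->]; by rewrite vscalz Rmult_0_r.
- move=> x a [-> ->]; rewrite (nu0 _ _ Hg); lra.
Qed.

Lemma PG_zero G p : isPG V nu G -> G p -> G (vzero, 0).
Proof.
case: p => x a [_ [_ [Gs _]]] Gp.
by have := Gs 0 _ _ Gp; rewrite vscal0 Rmult_0_l.
Qed.

Lemma hahn_banach x0 : exists f, lin f /\ (forall x, f x <= nu x) /\ f x0 = nu x0.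
Proof.
pose P' := fun G : V * R -> Prop => isPG V nu G /\ (forall p, G p -> G (x0, nu x0)).
have chain : forall F : set (set (V * R)), (F `<=` P')%classic ->
    total_on F subset -> P' (\bigcup_(X in F) X)%classic.
  move=> F FP Ft; split; [split; [|split; [|split]]|].
  - move=> x a b [X1 F1 X1a] [X2 F2 X2b].
    case: (Ft _ _ F1 F2) => S.
    + have [[Gf _] _] := FP _ F2; exact: Gf _ _ _ (S _ X1a) X2b.
    + have [[Gf _] _] := FP _ F1; exact: Gf _ _ _ X1a (S _ X2b).
  - move=> x y a b [X1 F1 X1a] [X2 F2 X2b].
    case: (Ft _ _ F1 F2) => S.
    + have [[_ [Ga _]] _] := FP _ F2; exists X2 => //; exact: Ga _ _ _ _ (S _ X1a) X2b.
    + have [[_ [Ga _]] _] := FP _ F1; exists X1 => //; exact: Ga _ _ _ _ X1a (S _ X2b).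
  - move=> t x a [X1 F1 X1a]; have [[_ [_ [Gs _]]] _] := FP _ F1.
    exists X1 => //; exact: Gs.
  - move=> x a [X1 F1 X1a]; have [[_ [_ [_ Gd]]] _] := FP _ F1; exact: Gd.
  - move=> p [X1 F1 X1a]; have [_ H] := FP _ F1; exists X1 => //; exact: H _ X1a.
have [A [[PA A0] Amax]] := Zorn_bigcup chain.
have A00 : A (vzero, 0).
  apply: NNPP => nA.
  have Aempty : forall p, ~ A p by move=> p Ap; apply: nA; exact: PG_zero Ap.
  case: (Classical_Prop.classic (x0 = vzero)) => Hx0.
  - apply: (Amax (fun p => p = (vzero, 0))).
    + split; first by move=> p /Aempty.
      by move=> H; apply: nA; apply: H.
    + split; first exact: PG_single.
      move=> p _; by rewrite Hx0 (nu0 _ _ Hg).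
  - have hz : forall a, ~ (fun p => p = (vzero, 0)) (x0, a).
      by move=> a [E _]; apply: Hx0.
    have hc : forall y a, (fun p => p = (vzero, 0)) (y, a) ->
        a - nu (vadd y (vopp x0)) <= nu x0 /\ nu x0 <= nu (vadd y x0) - a.
      move=> y a [-> ->]; rewrite !vadd0l.
      have h := nu_ge0 _ _ Hg (vopp x0); have h' := nu_ge0 _ _ Hg x0; split; lra.
    apply: (Amax (ext V (fun p => p = (vzero, 0)) x0 (nu x0))).
    + split; first by move=> p /Aempty.
      move=> H; apply: nA; apply: H; exact: ext_sub.
    + split; first exact: ext_PG _ _ Hg _ _ _ PG_single hz hc.
      move=> p _; exact: ext_z.
have Ax0 : A (x0, nu x0) := A0 _ A00.
have tot : forall z, exists a, A (z, a).
  move=> z; apply: NNPP => nz.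
  have hz : forall a, ~ A (z, a) by move=> a Az; apply: nz; exists a.
  have [c hc] := c_exists _ _ Hg _ z PA A00.
  apply: (Amax (ext V A z c)).
  + split; first by move=> p; exact: ext_sub.
    move=> H; apply: (hz c); apply: H; exact: ext_z.
  + split; first exact: ext_PG _ _ Hg _ _ _ PA hz hc.
    move=> p _; exact: ext_sub.
pose f := fun z => proj1_sig (cid (tot z)).
have Af : forall z, A (z, f z) by move=> z; exact: proj2_sig (cid (tot z)).
case: PA => [Gf [Ga [Gs Gd]]].
exists f; split; [split|split].
- move=> x y; exact: Gf _ _ _ (Af _) (Ga _ _ _ _ (Af x) (Af y)).
- move=> a x; exact: Gf _ _ _ (Af _) (Gs _ _ _ (Af x)).
- move=> x; exact: Gd _ _ (Af x).
- exact: Gf _ _ _ (Af _) Ax0.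
Qed.

End HB.
Local Open Scope classical_set_scope.
Definition Pt (V : Type) := {classic V} -> R.
HB.instance Definition _ V := Pointed.copy (Pt V) ({classic V} -> R).
HB.instance Definition _ V := Topological.copy (Pt V) (prod_topology (fun _ : {classic V} => R)).

Lemma proj_cont (V : Type) (x : V) : continuous (fun f : Pt V => f x).
Proof. exact: (@proj_continuous {classic V} (fun _ => R) x). Qed.

Lemma Pt_tych (V : Type) (A : {classic V} -> set R) : (forall i, compact (A i)) ->
  compact [set f : Pt V | forall i, A i (f i)].
Proof. move=> H. exact: (@tychonoff {classic V} (fun _ => R) A H). Qed.

Lemma contB3_R (V:Type) (u v w : V) : continuous (fun g : Pt V => (g u - g v - g w)%R).
Proof. move=> f; apply: (@continuousB R R^o (Pt V : topologicalType)); [apply: (@continuousB R R^o (Pt V : topologicalType))|]; exact: proj_cont. Qed.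
Lemma contB3 (V:Type) (u v w : V) : continuous (fun g : Pt V => g u - g v - g w).
Proof. move=> f. have := contB3_R V u v w f. exact. Qed.
Lemma contSc_R (V:Type) (a : R) (u v : V) : continuous (fun g : Pt V => (g u - a * g v)%R).
Proof. move=> f; apply: (@continuousB R R^o (Pt V : topologicalType)); first exact: proj_cont.
apply: (@continuousM R (Pt V : topologicalType)); [exact: cst_continuous|exact: proj_cont]. Qed.
Lemma contSc (V:Type) (a : R) (u v : V) : continuous (fun g : Pt V => g u - a * g v).
Proof. move=> f. have := contSc_R V a u v f. exact. Qed.

Lemma basic_open (V : Type) (x : V) (a b : R) : open (fun g : Pt V => a < g x < b).
Proof.
have H : open ((fun g : Pt V => g x) @^-1` ([set r : R | Order.lt a r] `&` [set r : R | Order.lt r b])).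
  apply: open_comp; first by move=> ? _; exact: proj_cont.
  apply: openI; [exact: open_gt | exact: open_lt].
have -> : (fun g : Pt V => a < g x < b) = ((fun g : Pt V => g x) @^-1` ([set r : R | Order.lt a r] `&` [set r : R | Order.lt r b])).
  apply/funext => g; apply/propext; rewrite /preimage /=; split.
  - by move=> [h1 h2]; split; apply/RltP.
  - by move=> [h1 h2]; split; apply/RltP.
exact: H.
Qed.

Lemma in_In (T : eqType) (x : T) (s : seq T) : x \in s -> List.In x s.
Proof.
elim: s => //= a s IH; rewrite in_cons => /orP [/eqP ->|/IH]; [left|right] => //.
Qed.

Section Topo.
Variable V : VecSpace.
Variable nu : V -> R.
Hypothesis Hg : is_gauge V nu.

Definition Xprop (f : V -> R) := lin V f /\ forall x, f x <= nu x.
Definition Xt := {f : V -> R | Xprop f}.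
Definition Xopen (A : Xt -> Prop) :=
  exists W : set (Pt V), open W /\ forall f : Xt, A f <-> W (proj1_sig f).

Lemma Xopen_full : Xopen (fun _ => True).
Proof. by exists setT; split; [exact: openT|]. Qed.

Lemma Xopen_union (I : Type) (U : I -> Xt -> Prop) :
  (forall i, Xopen (U i)) -> Xopen (fun x => exists i, U i x).
Proof.
move=> HU; pose Wf i := proj1_sig (cid (HU i)).
have HW i : open (Wf i) /\ forall f : Xt, U i f <-> Wf i (proj1_sig f) := proj2_sig (cid (HU i)).
exists (\bigcup_(i in setT) Wf i); split.
- apply: bigcup_open => i _; exact: (proj1 (HW i)).
- move=> f; split.
  + move=> [i Ui]; exists i => //; exact/(proj2 (HW i)).
  + move=> [i _ Wi]; exists i; exact/(proj2 (HW i)).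
Qed.

Lemma Xopen_inter (U W : Xt -> Prop) : Xopen U -> Xopen W -> Xopen (fun x => U x /\ W x).
Proof.
move=> [U' [oU HU]] [W' [oW HW]]; exists (U' `&` W'); split; first exact: openI.
move=> f; split.
- by move=> [/HU h1 /HW h2].
- by move=> [h1 h2]; split; [apply/HU|apply/HW].
Qed.

Definition XTop : TopSpace := Build_TopSpace Xt Xopen Xopen_full Xopen_union Xopen_inter.

Lemma Xneg (h : Xt) x : proj1_sig h (vopp x) = - proj1_sig h x.
Proof.
case: h => f [[_ fs] _] /=; rewrite voppE fs; ring.
Qed.

Lemma Xadd (h : Xt) x y : proj1_sig h (vadd x y) = proj1_sig h x + proj1_sig h y.
Proof. by case: h => f [[fa _] _] /=; rewrite fa. Qed.

Lemma Xbound (h : Xt) x : - nu (vopp x) <= proj1_sig h x <= nu x.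
Proof.
have := Xneg h x; case: h => f [_ fb] /= E; have := fb (vopp x); rewrite E; move: (fb x); lra.
Qed.

Lemma HBX x0 : exists h : Xt, proj1_sig h x0 = nu x0.
Proof.
have [f [fl [fb fx]]] := hahn_banach _ _ Hg x0.
by exists (exist _ f (conj fl fb)).
Qed.

Definition Xset : set (Pt V) := fun f => Xprop f.

Lemma Xset_closed : closed Xset.
Proof.
pose C1 (p : V * V) := (fun g : Pt V => g (vadd p.1 p.2) - g p.1 - g p.2) @^-1` [set r : R | r = 0].
pose C2 (q : R * V) := (fun g : Pt V => g (vscal q.1 q.2) - q.1 * g q.2) @^-1` [set r : R | r = 0].
pose C3 (x : V) := (fun g : Pt V => g x) @^-1` [set r : R | Order.le r (nu x)].
have -> : Xset = (\bigcap_(p in setT) C1 p) `&` (\bigcap_(q in setT) C2 q) `&` (\bigcap_(x in setT) C3 x).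
  apply/funext => g; apply/propext; rewrite /Xset /Xprop /lin /C1 /C2 /C3 /preimage /=; split.
  - move=> [[ga gs] gb]; split; [split|].
    + move=> [u v] _ /=; rewrite ga; ring.
    + move=> [a u] _ /=; rewrite gs; ring.
    + move=> x _ /=; exact/RleP.
  - move=> [[h1 h2] h3]; split; [split|].
    + move=> u v; have := h1 (u, v) I; simpl; lra.
    + move=> a u; have := h2 (a, u) I; simpl; lra.
    + move=> x; exact/RleP/(h3 x I).
apply: closedI; [apply: closedI|]; apply: closed_bigI => i _.
- apply: preimage_closed; last exact: closed_eq.
  move=> f _; exact: contB3.
- apply: preimage_closed; last exact: closed_eq.
  move=> f _; exact: contSc.
- apply: preimage_closed; last exact: closed_le.
  move=> f _; exact: proj_cont.
Qed.

Lemma Xset_compact : compact Xset.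
Proof.
pose A := fun i : {classic V} => [set r : R | Ropp (nu (vopp i)) <= r <= nu i].
apply: (subclosed_compact Xset_closed (Pt_tych V A _)).
- move=> i.
  have -> : A i = `[(Ropp (nu (vopp i))), (nu i)]%classic.
    apply/funext => r; apply/propext; rewrite /A /= in_itv /=; split.
    + by move=> [h1 h2]; apply/andP; split; apply/RleP.
    + by move=> /andP [h1 h2]; split; apply/RleP.
  exact: segment_compact.
- move=> f Xf i; have := Xbound (exist _ f Xf) i; simpl; done.
Qed.

Lemma Xcompact : compact_space XTop.
Proof.
move=> I U HU Hcov.
pose Wf (i : {classic I}) := proj1_sig (cid (HU i)).
have HW i : open (Wf i) /\ forall f : Xt, U i f <-> Wf i (proj1_sig f) := proj2_sig (cid (HU i)).
have Hc := Xset_compact; rewrite compact_cover in Hc.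
have Hfin : finite_subset_cover [set: {classic I}] Wf Xset.
  apply: Hc.
  - move=> i _; exact: (proj1 (HW i)).
  - move=> f Xf; have [i Ui] := Hcov (exist _ f Xf).
    exists i => //; exact: (proj1 (proj2 (HW i) (exist _ f Xf)) Ui).
case: Hfin => D' _ HD'.
exists (enum_fset D') => x.
have [i iD Wi] := HD' _ (proj2_sig x).
exists i; split; first by apply: (@in_In {classic I}); exact: iD.
exact/(proj2 (HW i)).
Qed.

Lemma Xhausdorff : hausdorff XTop.
Proof.
move=> f g fg.
have [x hx] : exists x, proj1_sig f x <> proj1_sig g x.
  apply: NNPP => H; apply: fg; apply: eq_sig_hprop; first by move=> ? ? ?; exact: Prop_irrelevance.
  apply/funext => x; apply: NNPP => Hx; apply: H; by exists x.
set a := proj1_sig f x; set b := proj1_sig g x.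
set d := Rabs (a - b) / 2.
have dpos : 0 < d by rewrite /d; have := Rabs_pos_lt (a - b) (Rminus_eq_contra _ _ hx); lra.
exists (fun h : Xt => a - d < proj1_sig h x < a + d), (fun h : Xt => b - d < proj1_sig h x < b + d).
split; [|split; [|split; [|split]]].
- by exists (fun h : Pt V => a - d < h x < a + d); split; [exact: basic_open|].
- by exists (fun h : Pt V => b - d < h x < b + d); split; [exact: basic_open|].
- rewrite /=; have : sval f x = a by []; lra.
- rewrite /=; have : sval g x = b by []; lra.
- move=> z [h1 h2]; move: dpos h1 h2; rewrite /d /Rabs; case: Rcase_abs => _; lra.
Qed.

Lemma Xcont (F : Xt -> R) x :
  (forall h h', Rabs (F h - F h') <= Rabs (proj1_sig h x - proj1_sig h' x)) ->
  continuous_fun XTop F.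
Proof.
move=> L f eps he.
exists (fun h : Xt => proj1_sig f x - eps < proj1_sig h x < proj1_sig f x + eps).
split; [|split].
- by exists (fun h : Pt V => proj1_sig f x - eps < h x < proj1_sig f x + eps); split; [exact: basic_open|].
- rewrite /=; lra.
- move=> y [h1 h2]; apply: (Rle_lt_trans _ _ _ (L y f)).
  apply: Rabs_def1; lra.
Qed.

End Topo.
Close Scope classical_set_scope.
Open Scope R_scope.

Theorem theorem2p13 (V : VecSpace) (nu : V -> R) (Hnu : is_proper_gauge V nu) :
  exists X : TopSpace, compact_space X /\ hausdorff X /\
  exists phi : V -> X -> R,
    (forall x, continuous_fun X (phi x)) /\
    is_linear V X phi /\
    (forall x, is_dC X (phi x) (nu x)) /\
    (forall x, is_supnorm X (phi x) (gauge_norm V nu x)) /\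
    (forall x y, phi x = phi y -> x = y) /\
    (forall x, (forall t, 0 <= phi x t) <-> gauge_cone V nu x).
Proof.
case: Hnu => Hg Hp.
exists (XTop V nu); split; first exact: Xcompact.
split; first exact: Xhausdorff.
exists (fun x (h : XTop V nu) => proj1_sig h x).
have nuge := nu_ge0 _ _ Hg.
split; [|split; [|split; [|split; [|split]]]].
- move=> x; apply: (Xcont _ _ _ x) => h h'; exact: Rle_refl.
- split.
  + move=> x y h; case: h => f [[fa _] _] /=; exact: fa.
  + move=> a x h; case: h => f [[_ fs] _] /=; exact: fs.
- move=> x; split.
  + move=> r [p [pc [pp [ub _]]]].
    have [h0 E0] := HBX _ _ Hg x.
    have := ub _ (or_intror (ex_intro _ h0 erefl)).
    rewrite /= E0; have := pp h0; move: (Rle_abs (nu x + p h0)); lra.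
  + move=> b Hb; apply: Hb.
    exists (fun h : XTop V nu => Rmax 0 (- proj1_sig h x)); split; [|split; [|split]].
    * apply: (Xcont _ _ _ x) => h h'.
      rewrite /Rmax; case: Rle_dec; case: Rle_dec; rewrite /Rabs;
        repeat case: Rcase_abs; lra.
    * move=> t; exact: Rmax_l.
    * move=> y [->|[t ->]]; first exact: nuge.
      have [_ tb] := Xbound _ _ t x.
      rewrite /Rmax /Rabs; case: Rle_dec; repeat case: Rcase_abs; move: (nuge x); lra.
    * move=> m Hm; have [h0 E0] := HBX _ _ Hg x.
      have := Hm _ (or_intror (ex_intro _ h0 erefl)).
      rewrite /= E0 /Rmax /Rabs; case: Rle_dec; repeat case: Rcase_abs; move: (nuge x); lra.
- move=> x; split.
  + move=> y [->|[t ->]]; first by rewrite /gauge_norm; move: (nuge x); move: (Rmax_l (nu x) (conj_gauge V nu x)); lra.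
    have := Xbound _ _ t x; rewrite /gauge_norm /conj_gauge.
    move: (Rmax_l (nu x) (nu (vopp x))) (Rmax_r (nu x) (nu (vopp x))).
    rewrite /Rabs; case: Rcase_abs; lra.
  + move=> m Hm; rewrite /gauge_norm /conj_gauge; apply: Rmax_lub.
    * have [h0 E0] := HBX _ _ Hg x.
      have := Hm _ (or_intror (ex_intro _ h0 erefl)); rewrite /= E0.
      move: (Rle_abs (nu x)); lra.
    * have [h0 E0] := HBX _ _ Hg (vopp x).
      have := Hm _ (or_intror (ex_intro _ h0 erefl)); rewrite /= -Rabs_Ropp -Xneg E0.
      move: (Rle_abs (nu (vopp x))); lra.
- move=> x y Exy; apply: NNPP => nxy.
  set w := vadd x (vopp y).
  have wn : w <> vzero by move=> /vsub_eq0.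
  have hw : forall h : Xt V nu, proj1_sig h w = 0.
    move=> h; have := f_equal (fun F => F h) Exy => /= Eh.
    rewrite /w Xadd Xneg Eh; ring.
  case: (Hp w wn); rewrite /conj_gauge.
  + have [h0 E0] := HBX _ _ Hg w; by rewrite -E0 hw.
  + have [h0 E0] := HBX _ _ Hg (vopp w); by rewrite -E0 Xneg hw Ropp_0.
- move=> x; rewrite /gauge_cone /conj_gauge; split.
  + move=> H; have [h0 E0] := HBX _ _ Hg (vopp x).
    have := H h0; rewrite /= -E0 Xneg; move: (nuge (vopp x)); rewrite -E0 Xneg; lra.
  + move=> H t; have := Xbound _ _ t x; rewrite H /=; lra.
Qed.
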